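(* Let $\mathcal M$ be the set of pairs of measurable functions $(\mu(\cdot),\sigma(\cdot))$ from $[0,1]$ into $D$. Then $$\inf_{(\mu,\sigma)\in\mathcal M}\frac{\Big(\int_0^1\big(h_0\mu(\omega)+h_1\sigma(\omega)\big)\,d\omega\Big)^2}{\int_0^1\big(\mu^2(\omega)+\sigma^2(\omega)\big)\,d\omega}=\min_{(x,y)\in D}\psi(x,y),$$ and the infimum on the left is attained.
   Context: Let $0<\mu_-<\mu_+$ and $0<\sigma_-<\sigma_+$ be real numbers, $D=[\mu_-,\mu_+]\times[\sigma_-,\sigma_+]$, and $h_0,h_1\in\mathbb R$. Write $\mu_M=(\mu_++\mu_-)/2$ and $\sigma_M=(\sigma_++\sigma_-)/2$. For $(x,y)\in D$ let $$\psi(x,y)=\frac{(h_0x+h_1y)^2}{2\mu_Mx+2\sigma_My-\mu_-\mu_+-\sigma_-\sigma_+};$$ the denominator is positive on $D$. *)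

(* Defs.v *)
From HB Require Import structures.
From mathcomp Require Import all_boot all_order all_algebra.
From mathcomp Require Import all_classical all_reals all_analysis.
Set Implicit Arguments. Unset Strict Implicit. Unset Printing Implicit Defensive.
Import Order.TTheory GRing.Theory Num.Theory.
Local Open Scope classical_set_scope.
Local Open Scope ring_scope.

Definition inD (R : realType) (mum mup sm sp : R) (x y : R) : Prop :=
  mum <= x <= mup /\ sm <= y <= sp.

Definition psi (R : realType) (mum mup sm sp h0 h1 : R) (x y : R) : R :=
  let muM := (mup + mum) / 2 in
  let sigM := (sp + sm) / 2 in
  (h0 * x + h1 * y) ^+ 2 /
    (2 * muM * x + 2 * sigM * y - mum * mup - sm * sp).

Definition inM (R : realType) (mum mup sm sp : R) (mu sigma : R -> R) : Prop :=
  measurable_fun (`[0%R, 1%R] : set R) mu /\ measurable_fun (`[0%R, 1%R] : set R) sigma /\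
  (forall w : R, 0 <= w <= 1 -> inD mum mup sm sp (mu w) (sigma w)).

Definition ratioM (R : realType) (h0 h1 : R) (mu sigma : R -> R) : R :=
  (Rintegral (@lebesgue_measure R) (`[0%R, 1%R] : set R) (fun w => h0 * mu w + h1 * sigma w)) ^+ 2 /
  Rintegral (@lebesgue_measure R) (`[0%R, 1%R] : set R) (fun w => mu w ^+ 2 + sigma w ^+ 2).

(* Main.v *)
Require Import Defs.
From HB Require Import structures.
From mathcomp Require Import all_boot all_order all_algebra.
From mathcomp Require Import all_classical all_reals all_analysis.
From mathcomp Require Import lra ring.
Import Order.TTheory GRing.Theory Num.Theory numFieldNormedType.Exports numFieldTopology.Exports.
Local Open Scope classical_set_scope.
Local Open Scope ring_scope.
Section S.
Context {R : realType}.
Let I : set R := `[0%R, 1%R].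
Notation lam := (@lebesgue_measure R).

Lemma mI : measurable I. Proof. exact: measurable_itv. Qed.
Lemma lamI : lam I = 1%E.
Proof. by rewrite /I lebesgue_measure_itv /= lte_fin ltr01 oppr0 adde0. Qed.

Lemma intg (f : R -> R) (M : R) : measurable_fun I f ->
  (forall w, I w -> `|f w| <= M) -> lam.-integrable I (EFin \o f).
Proof.
move=> mf fM; apply: measurable_bounded_integrable => //.
- exact: mI.
- by rewrite /= lamI ltry.
- exists M; split; first exact: num_real.
  move=> K MK w Iw /=; apply: (le_trans (fM w Iw)); exact: ltW.
Qed.

Lemma RcstI (r : R) : Rintegral lam I (fun=> r) = r.
Proof. by rewrite Rintegral_cst /=; [rewrite lamI mulr1 | exact: mI]. Qed.

Lemma absb (lo hi x : R) : lo <= x -> x <= hi -> `|x| <= `|lo| + `|hi|.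
Proof.
move=> h1 h2; rewrite ler_norml.
have := ler_norm lo; have := ler_norm hi; have := ler_normr lo (-lo).
have := normr_ge0 lo; have := normr_ge0 hi; rewrite normrN.
have := ler_norm (- lo); have := ler_norm (-hi); rewrite !normrN.
move=> *; apply/andP; split; lra.
Qed.


Definition good (f : R -> R) :=
  measurable_fun I f /\ exists M, forall w, I w -> `|f w| <= M.

Lemma good_int {f} : good f -> lam.-integrable I (EFin \o f).
Proof. by move=> [mf [M fM]]; exact: (@intg f M mf fM). Qed.

Lemma good_cst r : good (fun=> r).
Proof. by split; [exact: measurable_cst | exists `|r|]. Qed.

Lemma goodD {f g} : good f -> good g -> good (fun w => f w + g w).
Proof.
move=> [mf [M fM]] [mg [N gN]]; split; first exact: measurable_realfun.measurable_funD.
exists (M + N); move=> w Iw; apply: (le_trans (ler_normD _ _)); exact: lerD (fM w Iw) (gN w Iw).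
Qed.

Lemma goodB {f g} : good f -> good g -> good (fun w => f w - g w).
Proof.
move=> [mf [M fM]] [mg [N gN]]; split; first exact: measurable_realfun.measurable_funB.
exists (M + N); move=> w Iw; apply: (le_trans (ler_normB _ _)); exact: lerD (fM w Iw) (gN w Iw).
Qed.

Lemma goodM {f g} : good f -> good g -> good (fun w => f w * g w).
Proof.
move=> [mf [M fM]] [mg [N gN]]; split; first exact: measurable_realfun.measurable_funM.
exists (M * N); move=> w Iw; rewrite normrM; by apply: ler_pM; [exact: normr_ge0|exact: normr_ge0|exact: fM|exact: gN].
Qed.

Lemma goodZ k {f} : good f -> good (fun w => k * f w).
Proof. by move=> gf; apply: goodM => //; exact: good_cst. Qed.

Lemma goodX2 {f} : good f -> good (fun w => f w ^+ 2).
Proof.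
move=> gf; split.
  exact: measurable_realfun.measurable_funX (proj1 gf).
have [_ [M fM]] := goodM gf gf; exists M; move=> w Iw; rewrite expr2; exact: fM.
Qed.

Lemma lin_int mu sigma p q r1 r2 : good mu -> good sigma ->
  Rintegral lam I (fun w => p * mu w + q * sigma w - r1 - r2) =
  p * Rintegral lam I mu + q * Rintegral lam I sigma - r1 - r2.
Proof.
move=> gm gs.
have g1 := goodZ p gm; have g2 := goodZ q gs.
have g3 := goodD g1 g2.
have g4 := goodB g3 (good_cst r1).
rewrite RintegralB; [|exact: mI|exact: good_int|exact: good_int (good_cst _)].
rewrite RintegralB; [|exact: mI|exact: good_int|exact: good_int (good_cst _)].
rewrite RintegralD; [|exact: mI|exact: good_int|exact: good_int].
rewrite RintegralZl; [|exact: mI|exact: good_int].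
rewrite RintegralZl; [|exact: mI|exact: good_int].
by rewrite !RcstI.
Qed.

Lemma int_indic (t : R) : 0 <= t <= 1 ->
  Rintegral lam I (\1_(`[0%R, t] : set R)) = t.
Proof.
move=> /andP[t0 t1].
rewrite /Rintegral integral_indic; last exact: measurable_itv.
rewrite setIidl; last first.
  move=> w; rewrite /I /= !in_itv /= => /andP[w0 wt].
  by rewrite w0 (le_trans wt t1).
rewrite /= lebesgue_measure_itv /= lte_fin.
case: ifP => [_|]; first by rewrite /= subr0.
rewrite lt_def => /negbT; rewrite negb_and negbK t0 orbF => /eqP ->.
  by [].
by apply: mI.
Qed.


Lemma Lpos (a b c e x y : R) : 0 < a -> a < b -> 0 < c -> c < e -> a <= x -> c <= y ->
  0 < 2 * ((b + a) / 2) * x + 2 * ((e + c) / 2) * y - a * b - c * e.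
Proof.
move=> a0 ab c0 ce ax cy.
have -> : 2 * ((b + a) / 2) = b + a by field.
have -> : 2 * ((e + c) / 2) = e + c by field.
nra.
Qed.

Lemma cont_ratio (a b c d e1 e2 : R) (p : R * R) : a * p.1 + b * p.2 - e1 - e2 != 0 ->
  {for p, continuous (fun q : R * R => (c * q.1 + d * q.2) ^+ 2 / (a * q.1 + b * q.2 - e1 - e2))}.
Proof.
move=> nz.
have fst_cont : continuous (fun p : R * R => p.1) by move=> ?; exact: cvg_fst.
have snd_cont : continuous (fun p : R * R => p.2) by move=> ?; exact: cvg_snd.
have lin : forall u v : R, {for p, continuous (fun q : R * R => u * q.1 + v * q.2)}.
  move=> u v; apply: cvgD; apply: cvgMr.
  exact: fst_cont. exact: snd_cont.
apply: cvgM; first by rewrite expr2; apply: cvgM; exact: lin.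
apply: cvgV => //. apply: cvgB; [apply: cvgB; [exact: lin| exact: cvg_cst]|exact: cvg_cst].
Qed.

Lemma indic01 (A : set R) (w : R) : \1_A w = 0 :> R \/ \1_A w = 1 :> R.
Proof. by rewrite /indic; case: (w \in A); [right|left]. Qed.

Lemma sqb {a b x : R} : a <= x -> x <= b -> x ^+ 2 <= 2 * ((b + a) / 2) * x - a * b.
Proof. move=> h1 h2; have -> : 2 * ((b + a) / 2) = b + a by field. nra. Qed.

Lemma sqeq {a b x : R} : x = a \/ x = b -> x ^+ 2 = 2 * ((b + a) / 2) * x - a * b.
Proof. by case=> ->; field. Qed.

End S.

Theorem mainTheorem3 (R : realType) (mum mup sm sp h0 h1 : R) :
  0 < mum -> mum < mup -> 0 < sm -> sm < sp ->
  exists x0 y0 : R,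
    inD mum mup sm sp x0 y0 /\
    (forall x y, inD mum mup sm sp x y ->
       psi mum mup sm sp h0 h1 x0 y0 <= psi mum mup sm sp h0 h1 x y) /\
    (forall mu sigma : R -> R, inM mum mup sm sp mu sigma ->
       psi mum mup sm sp h0 h1 x0 y0 <= ratioM (R:=R) h0 h1 mu sigma) /\
    (exists mu sigma : R -> R, inM mum mup sm sp mu sigma /\
       ratioM (R:=R) h0 h1 mu sigma = psi mum mup sm sp h0 h1 x0 y0).
Proof.
move=> a0 ab c0 ce.
set A : set (R * R) := `[mum, mup] `*` `[sm, sp].
have A0 : A !=set0.
  by exists (mum, sm); rewrite /A /= !in_itv /= !lexx (ltW ab) (ltW ce).
have cA : compact A by apply: compact_setX; exact: segment_compact.
have cf : {within A, continuous (fun q : R * R => psi mum mup sm sp h0 h1 q.1 q.2)}.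
  apply: continuous_in_subspaceT => q; rewrite inE /A /= !in_itv /=.
  move=> [/andP[q1 _] /andP[q2 _]].
  rewrite /psi /=; apply: cont_ratio; rewrite gt_eqF //; exact: Lpos.
have [[x0 y0]] := compact_EVT_min A0 cA cf.
rewrite inE /A /= !in_itv /= => -[/andP[x0a x0b] /andP[y0c y0e]] Hmin.
have inD0 : inD mum mup sm sp x0 y0 by split; apply/andP.
have Hmin' : forall x y, inD mum mup sm sp x y ->
   psi mum mup sm sp h0 h1 x0 y0 <= psi mum mup sm sp h0 h1 x y.
  move=> x y [xD yD]; apply: (Hmin (x, y)).
  by rewrite inE /A /= !in_itv /=.
exists x0, y0; split => //; split => //; split.
- move=> mu sigma [mm [ms hD]].
  have hD' : forall w, (`[0%R, 1%R]%classic : set R) w -> mum <= mu w <= mup /\ sm <= sigma w <= sp.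
    by move=> w; rewrite /= in_itv /=; exact: hD.
  have gm : good mu.
    split => //; exists (`|mum| + `|mup|); move=> w Iw.
    by have [/andP[l h] _] := hD' w Iw; exact: absb.
  have gs : good sigma.
    split => //; exists (`|sm| + `|sp|); move=> w Iw.
    by have [_ /andP[l h]] := hD' w Iw; exact: absb.
  set X := Rintegral (@lebesgue_measure R) (`[0%R, 1%R]%classic : set R) mu.
  set Y := Rintegral (@lebesgue_measure R) (`[0%R, 1%R]%classic : set R) sigma.
  have Xa : mum <= X.
    rewrite -[X in X <= _](RcstI mum); apply: le_Rintegral.
    - exact: mI.
    - exact: good_int (good_cst _).
    - exact: good_int.
    - by move=> w Iw; have [/andP[l h] _] := hD' w Iw.
  have Xb : X <= mup.
    rewrite -[X in _ <= X](RcstI mup); apply: le_Rintegral.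
    - exact: mI.
    - exact: good_int.
    - exact: good_int (good_cst _).
    - by move=> w Iw; have [/andP[l h] _] := hD' w Iw.
  have Yc : sm <= Y.
    rewrite -[X in X <= _](RcstI sm); apply: le_Rintegral.
    - exact: mI.
    - exact: good_int (good_cst _).
    - exact: good_int.
    - by move=> w Iw; have [_ /andP[l h]] := hD' w Iw.
  have Ye : Y <= sp.
    rewrite -[X in _ <= X](RcstI sp); apply: le_Rintegral.
    - exact: mI.
    - exact: good_int.
    - exact: good_int (good_cst _).
    - by move=> w Iw; have [_ /andP[l h]] := hD' w Iw.
  have gQ := goodD (goodX2 gm) (goodX2 gs).
  have gL := goodB (goodB (goodD (goodZ (2 * ((mup + mum) / 2)) gm)
                   (goodZ (2 * ((sp + sm) / 2)) gs)) (good_cst (mum * mup))) (good_cst (sm * sp)).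
  have QL : Rintegral (@lebesgue_measure R) (`[0%R, 1%R]%classic : set R)
      (fun w => mu w ^+ 2 + sigma w ^+ 2) <=
      2 * ((mup + mum) / 2) * X + 2 * ((sp + sm) / 2) * Y - mum * mup - sm * sp.
    rewrite -lin_int //; apply: le_Rintegral.
    - exact: mI.
    - exact: good_int.
    - exact: good_int.
    - move=> w Iw; have [/andP[l1 h1'] /andP[l2 h2']] := hD' w Iw.
      have := sqb l1 h1'; have := sqb l2 h2'; lra.
  have Q0 : 0 < Rintegral (@lebesgue_measure R) (`[0%R, 1%R]%classic : set R)
      (fun w => mu w ^+ 2 + sigma w ^+ 2).
    apply: (@lt_le_trans _ _ (mum ^+ 2 + sm ^+ 2)).
      by apply: addr_gt0; apply: exprn_gt0.
    rewrite -[X in X <= _](RcstI (mum ^+ 2 + sm ^+ 2)); apply: le_Rintegral.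
    - exact: mI.
    - exact: good_int (good_cst _).
    - exact: good_int.
    - move=> w Iw; have [/andP[l1 h1'] /andP[l2 h2']] := hD' w Iw.
      apply: lerD; rewrite lerXn2r // ?nnegrE; lra.
  have N : Rintegral (@lebesgue_measure R) (`[0%R, 1%R]%classic : set R)
      (fun w => h0 * mu w + h1 * sigma w) = h0 * X + h1 * Y.
    have := @lin_int R mu sigma h0 h1 0 0 gm gs; rewrite !subr0 => <-.
    by apply: eq_Rintegral => w _; rewrite !subr0.
  have LP : 0 < 2 * ((mup + mum) / 2) * X + 2 * ((sp + sm) / 2) * Y - mum * mup - sm * sp.
    exact: Lpos.
  apply: (le_trans (Hmin' X Y _)); first by split; apply/andP.
  rewrite /ratioM N /psi /=.
  rewrite ler_pdivlMr // mulrAC ler_pdivrMr //.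
  by apply: ler_wpM2l => //; exact: sqr_ge0.
- have attain : forall mu sigma : R -> R, good mu -> good sigma ->
      (forall w, mu w = mum \/ mu w = mup) -> (forall w, sigma w = sm \/ sigma w = sp) ->
      Rintegral (@lebesgue_measure R) (`[0%R, 1%R]%classic : set R) mu = x0 ->
      Rintegral (@lebesgue_measure R) (`[0%R, 1%R]%classic : set R) sigma = y0 ->
      ratioM (R:=R) h0 h1 mu sigma = psi mum mup sm sp h0 h1 x0 y0.
    move=> mu sigma gm gs vm vs Xe Ye.
    have N : Rintegral (@lebesgue_measure R) (`[0%R, 1%R]%classic : set R)
        (fun w => h0 * mu w + h1 * sigma w) = h0 * x0 + h1 * y0.
      have := @lin_int R mu sigma h0 h1 0 0 gm gs; rewrite !subr0 Xe Ye => <-.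
      by apply: eq_Rintegral => w _; rewrite !subr0.
    have Q : Rintegral (@lebesgue_measure R) (`[0%R, 1%R]%classic : set R)
        (fun w => mu w ^+ 2 + sigma w ^+ 2) =
        2 * ((mup + mum) / 2) * x0 + 2 * ((sp + sm) / 2) * y0 - mum * mup - sm * sp.
      rewrite -Xe -Ye -lin_int //; apply: eq_Rintegral => w _.
      rewrite (sqeq (vm w)) (sqeq (vs w)); ring.
    by rewrite /ratioM N Q /psi.
  have gind : forall t : R, good (\1_(`[0%R, t]%classic : set R)).
    move=> t; split.
      apply: measurable_realfun.measurable_indic; exact: measurable_itv.
    exists 1; move=> w _; case: (indic01 (`[0%R, t]%classic : set R) w) => ->.
      by rewrite normr0.
    by rewrite normr1.
  have step : forall lo hi z : R, lo < hi -> lo <= z -> z <= hi ->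
      let t := (z - lo) / (hi - lo) in
      let f := fun w => lo + (hi - lo) * \1_(`[0%R, t]%classic : set R) w in
      [/\ good f, (forall w, f w = lo \/ f w = hi) &
       Rintegral (@lebesgue_measure R) (`[0%R, 1%R]%classic : set R) f = z].
    move=> lo hi z lh lz zh t f.
    have hl0 : 0 < hi - lo by rewrite subr_gt0.
    have t01 : 0 <= t <= 1.
      rewrite /t; apply/andP; split; first by apply: divr_ge0; lra.
      by rewrite ler_pdivrMr // mul1r; lra.
    have gf : good f by apply: goodD; [exact: good_cst | exact: goodZ].
    split => //.
      move=> w; rewrite /f; case: (indic01 (`[0%R, t]%classic : set R) w) => ->; [left|right]; ring.
    rewrite /f RintegralD; [|exact: mI|exact: good_int (good_cst _)|exact: good_int (goodZ _ (gind t))].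
    rewrite RintegralZl; [|exact: mI|exact: good_int (gind t)].
    rewrite RcstI int_indic // /t; field; lra.
  have [gm vm Xm] := step mum mup x0 ab x0a x0b.
  have [gs vs Ys] := step sm sp y0 ce y0c y0e.
  eexists; eexists; split; last exact: attain gm gs vm vs Xm Ys.
  split; first exact: gm.1.
  split; first exact: gs.1.
  move=> w _; split.
    by case: (vm w) => ->; rewrite ?lexx ?(ltW ab).
  by case: (vs w) => ->; rewrite ?lexx ?(ltW ce).
Qed.
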